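(* Let $q$ be a prime power with $q\not\equiv0\pmod3$. The line $L_c$ of $\mathrm{PG}(3,q)$ through $\mathbf{P}(1,0,0,1)$ and $\mathbf{P}(0,0,1,0)$ is an $\mathcal{E}_{nG}$-line.
   Context: Points of $\mathrm{PG}(3,q)$ are written $\mathbf{P}(x_0,x_1,x_2,x_3)$ over $\mathbb{F}_q$. For $t$ in $\mathbb{F}_q$ or in $\mathbb{F}_{q^2}$, put $P(t)=\mathbf{P}(t^3,t^2,t,1)$ and $P(\infty)=\mathbf{P}(1,0,0,0)$; the twisted cubic is $\mathscr{C}=\{P(t):t\in\mathbb{F}_q\cup\{\infty\}\}$. The osculating plane $\pi_{osc}(t)$ is the plane $x_0-3tx_1+3t^2x_2-t^3x_3=0$ for finite $t$, and $\pi_{osc}(\infty)$ is $x_3=0$. An imaginary chord is a line of $\mathrm{PG}(3,q)$ joining $P(t_1)$ and $P(t_2)$ for conjugate $t_1,t_2=t_1^q\in\mathbb{F}_{q^2}\setminus\mathbb{F}_q$; an imaginary axis is a line of $\mathrm{PG}(3,q)$ equal to $\pi_{osc}(t_1)\cap\pi_{osc}(t_2)$ for conjugate $t_1,t_2\in\mathbb{F}_{q^2}\setminus\mathbb{F}_q$. An $\mathcal{E}_{nG}$-line is a line of $\mathrm{PG}(3,q)$ having no point on $\mathscr{C}$, not contained in any osculating plane $\pi_{osc}(t)$, $t\in\mathbb{F}_q\cup\{\infty\}$, and which is neither an imaginary chord nor an imaginary axis. *)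

(* Defs.v *)
From HB Require Import structures.
From mathcomp Require Import all_boot all_order all_algebra all_field.
Set Implicit Arguments. Unset Strict Implicit. Unset Printing Implicit Defensive.
Import GRing.Theory.
Local Open Scope ring_scope.

(* Points of PG(3,.) are nonzero row vectors (x0,x1,x2,x3) up to scalars;
   a line of PG(3,q) is the row space of a rank-2 matrix L : 'M[F]_(2,4). *)

Definition Pt (R : nzRingType) (t : R) : 'rV[R]_4 :=
  \row_(j < 4) [:: t ^+ 3; t ^+ 2; t; 1]`_j.
Definition Pinf (R : nzRingType) : 'rV[R]_4 :=
  \row_(j < 4) [:: 1; 0; 0; 0]`_j.

(* Coefficient column of the osculating plane x0 - 3t x1 + 3t^2 x2 - t^3 x3 = 0 *)
Definition osc (R : nzRingType) (t : R) : 'cV[R]_4 :=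
  \col_(i < 4) [:: 1; - (3%:R * t); 3%:R * t ^+ 2; - t ^+ 3]`_i.
Definition osc_inf (R : nzRingType) : 'cV[R]_4 :=
  \col_(i < 4) [:: 0; 0; 0; 1]`_i.

Section Lines.
Variables (F K : finFieldType) (iota : {rmorphism F -> K}).

Definition is_line (L : 'M[F]_(2,4)) : Prop := \rank L = 2%N.

Definition meets_cubic (L : 'M[F]_(2,4)) : Prop :=
  (Pinf F <= L)%MS \/ exists t : F, (Pt t <= L)%MS.

Definition in_osc_plane (L : 'M[F]_(2,4)) : Prop :=
  L *m osc_inf F = 0 \/ exists t : F, L *m osc t = 0.

(* t lies in F_{q^2} \ F_q (K plays F_{q^2}, embedded via iota) *)
Definition imaginary (t : K) : Prop := forall a : F, iota a <> t.

Definition conjq (t : K) : K := t ^+ #|F|.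

(* L is the imaginary chord P(t1)P(t2), t2 = t1^q: its extension to K is the join *)
Definition imaginary_chord (L : 'M[F]_(2,4)) : Prop :=
  exists t : K, imaginary t /\
    (map_mx iota L == col_mx (Pt t) (Pt (conjq t)))%MS.

(* L is the imaginary axis pi_osc(t1) \cap pi_osc(t2), t2 = t1^q:
   its extension to K equals the common solution space of the two planes *)
Definition imaginary_axis (L : 'M[F]_(2,4)) : Prop :=
  exists t : K, imaginary t /\
    (map_mx iota L == kermx (row_mx (osc t) (osc (conjq t))))%MS.

Definition EnG_line (L : 'M[F]_(2,4)) : Prop :=
  [/\ is_line L, ~ meets_cubic L, ~ in_osc_plane L,
      ~ imaginary_chord L & ~ imaginary_axis L].

End Lines.

Definition Lc (F : nzRingType) : 'M[F]_(2,4) :=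
  col_mx (\row_(j < 4) [:: 1; 0; 0; 1]`_j) (\row_(j < 4) [:: 0; 0; 1; 0]`_j).

(* Main.v *)
Require Import Defs.
From HB Require Import structures.
From mathcomp Require Import all_boot all_order all_algebra all_field.
Import GRing.Theory.
Local Open Scope ring_scope.

Lemma three_neq0 (F : finFieldType) : (#|F| %% 3 != 0)%N -> (3%:R : F) != 0.
Proof.
move=> hq; apply/negP => h3.
have c3 : (3 \in [pchar F])%N by rewrite inE /= h3.
have := card_pprimeChar c3.
set n := logn _ _ => hc.
have e : #|F| = (3 ^ n)%N by exact: hc.
move: hq (finNzRing_gt1 F); rewrite e.
by case: n {hc e} => [|n]; [rewrite expn0 | rewrite expnS modnMr].
Qed.

Lemma LcE (R : nzRingType) (i : 'I_2) (j : 'I_4) :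
  Lc R i j = if i == 0 then [:: 1; 0; 0; 1]`_j else [:: 0; 0; 1; 0]`_j.
Proof.
rewrite /Lc; set r1 := \row_j _; set r2 := \row_j _.
case: i => [[|[|//]] Hi].
  have -> : Ordinal Hi = lshift 1 (0 : 'I_1) by apply: val_inj.
  by have E := col_mxEu r1 r2 (0 : 'I_1) j; rewrite E mxE.
have -> : Ordinal Hi = rshift 1 (0 : 'I_1) by apply: val_inj.
by have E := col_mxEd r1 r2 (0 : 'I_1) j; rewrite E mxE.
Qed.

Lemma Lc_rank (R : fieldType) : \rank (Lc R) = 2%N.
Proof.
apply/eqP; change (row_free (Lc R)); apply/row_freeP.
exists (\matrix_(i < 4, j < 2) (if ((i == 0 :> nat) && (j == 0 :> nat)) || ((i == 2 :> nat) && (j == 1 :> nat)) then 1 else 0 : R)).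
apply/matrixP => i j; rewrite !mxE !big_ord_recl big_ord0 !LcE !mxE /=.
case: i => [[|[|//]] Hi]; case: j => [[|[|//]] Hj] /=;
  by rewrite ?mul0r ?mul1r ?mulr0 ?add0r ?addr0.
Qed.

Lemma subLc (R : fieldType) (w : 'rV[R]_4) :
  (w <= Lc R)%MS -> w 0 1 = 0 /\ w 0 0 = w 0 3.
Proof.
case/submxP => D ->.
have -> : D = row_mx (lsubmx (D : 'M_(1,1+1))) (rsubmx (D : 'M_(1,1+1))) by rewrite hsubmxK.
rewrite /Lc; set r1 := \row_j _; set r2 := \row_j _.
have E := mul_row_col (lsubmx (D : 'M_(1,1+1))) (rsubmx (D : 'M_(1,1+1))) r1 r2.
rewrite E.
rewrite !mxE !big_ord1 !mxE /=.
by rewrite !mulr0 !mulr1 !add0r !addr0.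
Qed.

Lemma Pinf_notin (R : fieldType) : ~ (Pinf R <= Lc R)%MS.
Proof.
move/subLc => [_]; rewrite !mxE /= => /eqP; by rewrite oner_eq0.
Qed.

Lemma Pt_notin (R : fieldType) (t : R) : ~ (Pt t <= Lc R)%MS.
Proof.
move/subLc => []; rewrite !mxE /= => /eqP; rewrite expf_eq0 /= => /eqP ->.
by rewrite expr0n /= => /eqP; rewrite eq_sym oner_eq0.
Qed.

Lemma Lc_mul (R : fieldType) (B : 'cV[R]_4) : (Lc R *m B = 0) ->
  (\row_j [:: 1; 0; 0; 1]`_j) *m B = 0 /\ (\row_j [:: 0; 0; 1; 0]`_j) *m B = 0 :> 'M[R]_1.
Proof.
rewrite /Lc; set r1 := \row_j _; set r2 := \row_j _.
have E := mul_col_mx r1 r2 B. rewrite E => h.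
apply: eq_col_mx; rewrite col_mx0; exact: h.
Qed.

Lemma Lc_osc (R : fieldType) (t : R) : (3%:R : R) != 0 -> Lc R *m osc t <> 0.
Proof.
move=> h3 /Lc_mul [e0 e1].
have := congr1 (fun M : 'M[R]_(1,1) => M 0 0) e0.
have := congr1 (fun M : 'M[R]_(1,1) => M 0 0) e1.
rewrite !mxE !big_ord_recl !big_ord0 !mxE /=.
rewrite !mul0r !mul1r !add0r !addr0 => /eqP; rewrite mulf_eq0 (negbTE h3) /=.
rewrite expf_eq0 /= => /eqP ->.
by rewrite expr0n /= oppr0 addr0 => /eqP; rewrite oner_eq0.
Qed.

Lemma Lc_oscinf (R : fieldType) : Lc R *m osc_inf R <> 0.
Proof.
move=> /Lc_mul [e0 e1].
have := congr1 (fun M : 'M[R]_(1,1) => M 0 0) e0.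
rewrite !mxE !big_ord_recl !big_ord0 !mxE /=.
rewrite !mul0r !mul1r !add0r !addr0 => /eqP; by rewrite oner_eq0.
Qed.

Lemma map_Lc (F K : fieldType) (iota : {rmorphism F -> K}) :
  map_mx iota (Lc F) = Lc K.
Proof.
apply/matrixP => i j; rewrite mxE !LcE.
case: (i == 0); case: j => [[|[|[|[|//]]]] Hj] /=; by rewrite ?rmorph0 ?rmorph1.
Qed.

Theorem lemma3p1 (F K : finFieldType) (iota : {rmorphism F -> K})
  (hK : #|K| = (#|F| ^ 2)%N) (hq : (#|F| %% 3 != 0)%N) :
  EnG_line iota (Lc F).
Proof.
have h3F := @three_neq0 F hq.
have h3K : (3%:R : K) != 0 by rewrite -(rmorph_nat iota) fmorph_eq0.
split.
- exact: Lc_rank.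
- by case=> [/Pinf_notin | [t /Pt_notin]].
- case=> [/Lc_oscinf // | [t]]; exact: Lc_osc.
- case=> t [_ /andP[h1 h2]]; rewrite map_Lc in h1 h2.
  apply: (@Pt_notin K t); apply: submx_trans h2.
  by rewrite -addsmxE addsmxSl.
- case=> t [_ /andP[h1 _]]; rewrite map_Lc in h1.
  move/sub_kermxP: h1; rewrite mul_mx_row => /eqP; rewrite row_mx_eq0.
  case/andP=> /eqP h _; move: h; exact: Lc_osc.
Qed.
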